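(* Let $G$ be a connected graph with $n$ vertices and $k\ge1$. Let $B_k(G)$ be the sum of the spanning tree weights of all balanced connected $k$-partitions of $G$, and let $\tau_k(G)$ be the number of $k$-splittable spanning trees of $G$. Then $B_k(G)$ and $\tau_k(G)$ are within a factor $n^{2(k-1)}$ of each other, i.e. $n^{-2(k-1)}\tau_k(G)\le B_k(G)\le n^{2(k-1)}\tau_k(G)$.
   Context: A tree $T$ is $k$-splittable if there exist $k-1$ edges of $T$ whose removal leaves a forest whose $k$ connected components all have the same number of vertices. A connected $k$-partition of $G=(V,E)$ is a partition of $V$ into $k$ nonempty sets (pieces) each inducing a connected subgraph; it is balanced if all pieces have equal size. For a graph $H$, $\tau(H)$ is its number of spanning trees, and the spanning tree weight of a connected partition $P$ is $\prod_{S\in P}\tau(G[S])$. *)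

(* Defs.v *)
From mathcomp Require Import all_boot.
From mathcomp Require Import boolp.
Set Implicit Arguments. Unset Strict Implicit. Unset Printing Implicit Defensive.

Section Graphs.
Variable T : finType.

Definition simple_graph (e : rel T) : Prop := symmetric e /\ irreflexive e.

Definition graph_connected (e : rel T) : Prop := forall x y : T, connect e x y.

(* Edges are 2-element vertex sets; an edge set is a {set {set T}}. *)
Definition edge_in (e : rel T) (S : {set T}) (f : {set T}) : bool :=
  [exists x, exists y, [&& x \in S, y \in S, e x y & f == [set x; y]]].

Definition adjF (F : {set {set T}}) : rel T :=
  fun x y => (x != y) && ([set x; y] \in F).

Definition connected_on (F : {set {set T}}) (S : {set T}) : Prop :=
  forall x y, x \in S -> y \in S ->
    connect (fun a b => [&& a \in S, b \in S & adjF F a b]) x y.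

Definition acyclic (F : {set {set T}}) : Prop :=
  ~ exists s : seq T, [/\ 3 <= size s, uniq s & cycle (adjF F) s].

Definition spanning_tree (e : rel T) (S : {set T}) (F : {set {set T}}) : Prop :=
  [/\ {in F, forall f, edge_in e S f}, connected_on F S & acyclic F].

Definition tau (e : rel T) (S : {set T}) : nat :=
  #|[set F : {set {set T}} | `[< spanning_tree e S F >] ]|.

Definition components (F : {set {set T}}) : {set {set T}} :=
  equivalence_partition (fun x y => connect (adjF F) x y) [set: T].

Definition splittable (k : nat) (F : {set {set T}}) : Prop :=
  exists R : {set {set T}},
    [/\ R \subset F, #|R| = k.-1, #|components (F :\: R)| = k &
        forall A B, A \in components (F :\: R) -> B \in components (F :\: R) ->
          #|A| = #|B| ].

Definition balanced_connected_partition (e : rel T) (k : nat) (P : {set {set T}}) : Prop :=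
  [/\ partition P [set: T], #|P| = k,
      (forall S, S \in P -> connected_on [set f | edge_in e S f] S) &
      (forall A B, A \in P -> B \in P -> #|A| = #|B|)].

Definition Bk (e : rel T) (k : nat) : nat :=
  \sum_(P : {set {set T}} | `[< balanced_connected_partition e k P >])
     \prod_(S in P) tau e S.

Definition tauk (e : rel T) (k : nat) : nat :=
  #|[set F : {set {set T}} | `[< spanning_tree e [set: T] F /\ splittable k F >] ]|.

End Graphs.

(* Main.v *)
Require Import Defs.
From mathcomp Require Import all_boot.
From mathcomp Require Import boolp.
Set Implicit Arguments. Unset Strict Implicit. Unset Printing Implicit Defensive.

Lemma adjF_sym (T : finType) (F : {set {set T}}) : symmetric (adjF F).
Proof. by move=> x y; rewrite /adjF eq_sym setUC. Qed.

Lemma conn_sym (T : finType) (F : {set {set T}}) x y :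
  connect (adjF F) x y = connect (adjF F) y x.
Proof. exact: (sym_connect_sym (adjF_sym F)). Qed.

Lemma conn_equiv (T : finType) (F : {set {set T}}) :
  equivalence_rel (connect (adjF F)).
Proof.
move=> x y z; split; first exact: connect0.
move=> Hxy; apply/idP/idP => H.
  by apply: connect_trans H; rewrite conn_sym.
exact: connect_trans Hxy H.
Qed.

Lemma compP (T : finType) (F : {set {set T}}) : partition (components F) [set: T].
Proof. apply: equivalence_partitionP => x y z _ _ _; exact: conn_equiv. Qed.

Lemma comp_pb (T : finType) (F : {set {set T}}) x y :
  (y \in pblock (components F) x) = connect (adjF F) x y.
Proof.
apply: pblock_equivalence_partition; rewrite ?in_setT //.
move=> a b c _ _ _; exact: conn_equiv.
Qed.

Lemma comp_cover (T : finType) (F : {set {set T}}) x : x \in cover (components F).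
Proof. by rewrite (cover_partition (compP F)) in_setT. Qed.

Lemma comp_mem (T : finType) (F : {set {set T}}) x : pblock (components F) x \in components F.
Proof. exact: pblock_mem (comp_cover F x). Qed.

Lemma comp_def (T : finType) (F : {set {set T}}) S x :
  S \in components F -> x \in S -> S = pblock (components F) x.
Proof.
move=> HS Hx; case/and3P: (compP F) => _ tI _.
by rewrite (def_pblock tI HS Hx).
Qed.
Lemma conn_ind (T : finType) (r : rel T) (Q : T -> Prop) z w :
  (forall u v, r u v -> Q u -> Q v) -> Q z -> connect r z w -> Q w.
Proof.
move=> st Qz /connectP[p pp ->]; elim: p z Qz pp => //= v p IH z Qz /andP[rzv pp].
exact: IH (st _ _ rzv Qz) pp.
Qed.

Lemma adjF_add (T : finType) (H : {set {set T}}) x y a b :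
  adjF ([set x; y] |: H) a b = ((a != b) && ([set a; b] == [set x; y])) || adjF H a b.
Proof. by rewrite /adjF in_setU1 andb_orr. Qed.

Lemma pair_in (T : finType) (a b x y : T) : [set a; b] = [set x; y] ->
  (a \in [set x; y]) && (b \in [set x; y]).
Proof. by move=> <-; rewrite !inE !eqxx orbT. Qed.

Lemma conn_add (T : finType) (H : {set {set T}}) x y z w :
  connect (adjF ([set x; y] |: H)) z w =
  connect (adjF H) z w ||
  ((connect (adjF H) x z || connect (adjF H) y z) &&
   (connect (adjF H) x w || connect (adjF H) y w)).
Proof.
set H' := [set x; y] |: H.
have sub : subrel (adjF H) (adjF H').
  by move=> a b; rewrite adjF_add => ->; rewrite orbT.
have cxy : connect (adjF H') x y.
  case: (eqVneq x y) => [->|nxy]; first exact: connect0.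
  by apply: connect1; rewrite adjF_add nxy eqxx.
have toX v : connect (adjF H) x v || connect (adjF H) y v -> connect (adjF H') x v.
  case/orP => h; first exact: connect_sub (fun a b h => connect1 (sub a b h)) _ _ h.
  apply: connect_trans cxy _; exact: connect_sub (fun a b h => connect1 (sub a b h)) _ _ h.
apply/idP/idP.
  move=> hc; apply: (conn_ind (Q := fun v => connect (adjF H) z v ||
   ((connect (adjF H) x z || connect (adjF H) y z) &&
   (connect (adjF H) x v || connect (adjF H) y v))) _ _ hc) => [u v|]; last by rewrite connect0.
  rewrite adjF_add => /orP[/andP[nuv /eqP euv]|huv].
    case/andP: (pair_in euv) => _; rewrite !inE => hv.
    have hv' : connect (adjF H) x v || connect (adjF H) y v.
      by case/orP: hv => /eqP ->; rewrite connect0 ?orbT.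
    case/andP: (pair_in euv) => hu _; rewrite !inE in hu.
    case/orP => [hzu|/andP[hz _]]; last by rewrite hz hv' orbT.
    apply/orP; right; rewrite hv' andbT.
    by case/orP: hu => /eqP eu; subst u;
      [by rewrite conn_sym hzu | by rewrite (conn_sym _ y z) hzu orbT].
  case/orP => [hzu|/andP[hz hu]]; first by rewrite (connect_trans hzu (connect1 huv)).
  apply/orP; right; rewrite hz /=.
  by case/orP: hu => h; rewrite (connect_trans h (connect1 huv)) ?orbT.
case/orP => [|/andP[hz hw]].
  exact: connect_sub (fun a b h => connect1 (sub a b h)) _ _.
apply: connect_trans (toX _ hw); rewrite (sym_connect_sym (adjF_sym H')).
exact: toX.
Qed.

Lemma acyc_sub (T : finType) (F F' : {set {set T}}) :
  F' \subset F -> acyclic F -> acyclic F'.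
Proof.
move=> sF acF [s [ss us cs]]; apply: acF; exists s; split => //.
apply: sub_cycle cs => a b /andP[h1 h]; rewrite /adjF h1 /=; exact: (subsetP sF).
Qed.

Lemma acyc_add (T : finType) (H : {set {set T}}) x y :
  x != y -> ~~ connect (adjF H) x y -> acyclic H -> acyclic ([set x; y] |: H).
Proof.
move=> nxy ncon acH [s [ss us cs]].
set H' := [set x; y] |: H in cs.
have [a sa na]: exists2 a, a \in s & ~~ adjF H a (next s a).
  apply/allPn; apply: contra_notN acH => /allP hall.
  by exists s; split => //; apply: cycle_from_next.
have Hab : adjF H' a (next s a) := next_cycle cs sa.
set b := next s a in na Hab.
have [nab eab] : a != b /\ [set a; b] = [set x; y].
  move: Hab; rewrite adjF_add (negbTE na) orbF => /andP[h1 /eqP h2] //.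
pose s' := rot (index a s) s.
have es' : s' = a :: (drop (index a s).+1 s ++ take (index a s) s) by rewrite /s' rot_index.
have us' : uniq s' by rewrite rot_uniq.
have cs' : cycle (adjF H') s' by rewrite rot_cycle.
have ss' : 3 <= size s' by rewrite size_rot.
have nb : next s' a = b by rewrite /s' next_rot.
move: us' cs' ss' nb; rewrite es'.
case: (drop _ _ ++ take _ _) => [|b' u] //=.
rewrite /next /= eqxx => us' cs' ss' eb; subst b'.
case: u us' cs' ss' => [|c0 u'] // us' cs' _.
move: cs'; rewrite rcons_path => /and3P[_ pth lst].
set u := c0 :: u' in us' pth lst.
set c := last b u in lst.
have cu : c \in u by rewrite /c /u /= mem_last.
have ec : c = last b u by [].
clearbody c u.
move: us'; rewrite in_cons negb_or => /and3P[/andP[_ nau] nbu _].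
have nca : c != a by apply/eqP => e; move: nau; rewrite -e cu.
have ncb : c != b by apply/eqP => e; move: nbu; rewrite -e cu.
have Hca : adjF H c a.
  move: lst; rewrite adjF_add => /orP[/andP[_ /eqP e]|//].
  move: e; rewrite -eab => e; have := pair_in e; rewrite !inE (negbTE nca) (negbTE ncb).
  by [].
have pH : path (adjF H) b u.
  apply: (@sub_in_path _ (predC1 a) (adjF H')) pth.
    move=> v1 v2 h1 h2; rewrite adjF_add => /orP[/andP[nv /eqP e]|//].
    have := pair_in e; rewrite -eab !inE.
    move: h1 h2; rewrite !inE => /negbTE -> /negbTE -> /= /andP[/eqP e1 /eqP e2].
    by move: nv; rewrite e1 e2 eqxx.
  rewrite /= eq_sym nab /=; apply/allP => v vu /=; apply/eqP => e; move: nau.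
  by rewrite -e vu.
have cba : connect (adjF H) b a.
  apply: connect_trans _ (connect1 Hca); apply/connectP; by exists u.
move/negP: ncon; apply.
have := pair_in eab; rewrite !inE => /andP[/orP[] /eqP ea /orP[] /eqP eb].
- by move: nab; rewrite ea eb eqxx.
- by rewrite -ea -eb conn_sym.
- by rewrite -ea -eb.
- by move: nab; rewrite ea eb eqxx.
Qed.

Lemma part_img (T : finType) (P : {set {set T}}) :
  partition P [set: T] -> P = [set pblock P z | z in [set: T]].
Proof.
case/and3P => /eqP cov tI n0; apply/setP => S; apply/idP/imsetP.
  move=> PS; have : S != set0 by apply: contraNneq n0 => <-.
  case/set0Pn => z zS; exists z; first exact: in_setT.
  by rewrite (def_pblock tI PS zS).
by move=> [z _ ->]; apply: pblock_mem; rewrite cov in_setT.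
Qed.

Lemma comp_tI (T : finType) (F : {set {set T}}) : trivIset (components F).
Proof. by case/and3P: (compP F). Qed.

Lemma comp_eqpb (T : finType) (F : {set {set T}}) x y :
  (pblock (components F) x == pblock (components F) y) = connect (adjF F) x y.
Proof. by rewrite eq_pblock ?comp_tI ?comp_cover // comp_pb. Qed.

Lemma comp_add_card (T : finType) (H : {set {set T}}) x y :
  ~~ connect (adjF H) x y ->
  #|components ([set x; y] |: H)| = #|components H| - 1.
Proof.
move=> ncon.
set P := components H; set P' := components _.
set Cx := pblock P x; set Cy := pblock P y.
pose g A := if (A == Cx) || (A == Cy) then Cx :|: Cy else A.
have eqg z : pblock P' z = g (pblock P z).
  apply/setP => w; rewrite comp_pb /g conn_add !comp_eqpb.
  rewrite (conn_sym _ z x) (conn_sym _ z y).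
  case: ifP => hz; last by rewrite andFb orbF comp_pb.
  rewrite andTb inE !comp_pb; apply/idP/idP; last by move=> ->; rewrite orbT.
  case/orP => [hzw|//]; case/orP: hz => h; by rewrite (connect_trans h hzw) ?orbT.
have eP' : P' = g @: P.
  have e2 : P = [set pblock P z | z in [set: T]] := part_img (compP H).
  transitivity [set pblock P' z | z in [set: T]]; first exact: part_img (compP _).
  rewrite [in RHS]e2 -imset_comp.
  by apply: eq_imset => z; rewrite eqg.
have nxy : Cy != Cx by rewrite eq_sym comp_eqpb.
have PCx : Cx \in P by exact: comp_mem.
have PCy : Cy \in P by exact: comp_mem.
have e3 : g @: P = g @: (P :\ Cx).
  apply/eqP; rewrite eqEsubset; apply/andP; split; last exact/imsetS/subD1set.
  apply/subsetP => _ /imsetP[A PA ->]; case: (eqVneq A Cx) => [->|nA].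
    have -> : g Cx = g Cy by rewrite /g !eqxx orbT.
    by apply: imset_f; rewrite !inE nxy PCy.
  by apply: imset_f; rewrite !inE nA PA.
rewrite eP' e3 card_in_imset.
  by rewrite (cardsD1 Cx P) PCx add1n subn1.
move=> A B /setD1P[nA PA] /setD1P[nB PB]; rewrite /g (negbTE nA) (negbTE nB) /=.
have hx : x \in Cx :|: Cy by rewrite inE /Cx mem_pblock comp_cover.
case: (eqVneq A Cy) => [->|nAy]; case: (eqVneq B Cy) => [->|nBy] //= e.
  have xB : x \in B by rewrite -e.
  by case/eqP: nB; rewrite -(def_pblock (comp_tI H) PB xB).
have xA : x \in A by rewrite e.
by case/eqP: nA; rewrite -(def_pblock (comp_tI H) PA xA).
Qed.

Lemma comp1_conn (T : finType) (F : {set {set T}}) :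
  #|components F| = 1 -> connected_on F [set: T].
Proof.
move=> /eqP/cards1P [S0 eS] a b _ _.
have h z : pblock (components F) z = S0.
  by have := comp_mem F z; rewrite eS inE => /eqP.
have : b \in pblock (components F) a by rewrite h -(h b) mem_pblock comp_cover.
have er : (fun a b => [&& a \in [set: T], b \in [set: T] & adjF F a b]) =2 adjF F.
  by move=> u v; rewrite !in_setT.
by rewrite (eq_connect er) -comp_pb.
Qed.

Lemma path_cross (T : finType) (e : rel T) (Q : pred T) x p :
  path e x p -> Q x -> ~~ Q (last x p) -> exists u v, [/\ e u v, Q u & ~~ Q v].
Proof.
elim: p x => [|y p IH] x /=; first by move=> _ Qx nQ; rewrite Qx in nQ.
move=> /andP[exy pp] Qx nQ; case: (boolP (Q y)) => Qy; first exact: (IH y pp Qy nQ).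
by exists x, y.
Qed.

Lemma cross (T : finType) (e : rel T) (F : {set {set T}}) :
  graph_connected e -> 1 < #|components F| ->
  exists u v, e u v /\ ~~ connect (adjF F) u v.
Proof.
move=> gc /card_gt1P [S1 [S2 [P1 P2 n12]]].
have ne S : S \in components F -> exists z, z \in S.
  move=> PS; case/and3P: (compP F) => _ _ n0.
  have : S != set0 by apply: contraNneq n0 => <-.
  by case/set0Pn => z zS; exists z.
have [x xS] := ne _ P1; have [z zS] := ne _ P2.
have nxz : ~~ connect (adjF F) x z.
  rewrite -comp_eqpb -(comp_def P1 xS) -(comp_def P2 zS); exact: n12.
have /connectP [p pp ez] := gc x z.
have nz : ~~ connect (adjF F) x (last x p) by rewrite -ez.
have [u [v [euv Qu nQv]]] := @path_cross _ e (connect (adjF F) x) x p pp (connect0 _ _) nz.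
exists u, v; split => //; apply: contra nQv => cuv; exact: connect_trans Qu cuv.
Qed.

Lemma extend (T : finType) (e : rel T) m :
  simple_graph e -> graph_connected e -> forall H, acyclic H ->
  {in H, forall f, edge_in e [set: T] f} -> #|components H| = m.+1 ->
  exists R : {set {set T}}, [/\ {in R, forall f, f \notin H}, #|R| = m,
    {in R, forall f, edge_in e [set: T] f}, acyclic (H :|: R) &
    connected_on (H :|: R) [set: T]].
Proof.
move=> [sym irr] gc; elim: m => [|m IH] H acH eH cH.
  exists set0; rewrite setU0 cards0; split.
  - by move=> f; rewrite inE.
  - by [].
  - by move=> f; rewrite inE.
  - exact: acH.
  - exact: comp1_conn.
have c1 : 1 < #|components H| by rewrite cH.
have [u [v [euv nc]]] := cross gc c1.
have nuv : u != v by apply: contraTneq euv => ->; rewrite irr.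
set f := [set u; v]; set H' := f |: H.
have fH : f \notin H.
  by apply: contra nc => fH; apply: connect1; rewrite /adjF nuv fH.
have acH' : acyclic H' := acyc_add nuv nc acH.
have ef : edge_in e [set: T] f.
  by apply/existsP; exists u; apply/existsP; exists v; rewrite !in_setT euv eqxx.
have eH' : {in H', forall f, edge_in e [set: T] f}.
  by move=> g /setU1P [->|]; [exact: ef | exact: eH].
have cH' : #|components H'| = m.+1 by rewrite comp_add_card // cH.
have [R' [dR' cR' eR' aR' coR']] := IH H' acH' eH' cH'.
have fR' : f \notin R' by apply/negP => /dR'; rewrite in_setU1 eqxx.
exists (f |: R'); rewrite setUCA setUA; split => //.
- move=> g /setU1P [->//|/dR']; by rewrite in_setU1 negb_or => /andP[].
- by rewrite cardsU1 fR' cR'.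
- by move=> g /setU1P [->|]; [exact: ef | exact: eR'].
Qed.

Definition restr (T : finType) (H : {set {set T}}) (S : {set T}) :=
  [set f in H | f \subset S].

Definition goodH (T : finType) (e : rel T) (k : nat) (H : {set {set T}}) : Prop :=
  [/\ {in H, forall f, edge_in e [set: T] f},
      balanced_connected_partition e k (components H) &
      forall S, S \in components H -> spanning_tree e S (restr H S)].

Definition stS (T : finType) (e : rel T) (S : {set T}) :=
  [set F : {set {set T}} | `[< spanning_tree e S F >] ].

Definition UU (T : finType) (P : {set {set T}}) (g : {ffun {set T} -> {set {set T}}}) :=
  \bigcup_(S in P) g S.

Lemma edge_inP (T : finType) (e : rel T) (S : {set T}) f :
  edge_in e S f -> exists x y, [/\ x \in S, y \in S, e x y & f = [set x; y]].
Proof. by case/existsP => x /existsP [y /and4P[xS yS exy /eqP ->]]; exists x, y. Qed.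

Lemma edge_sub (T : finType) (e : rel T) (S : {set T}) f : edge_in e S f -> f \subset S.
Proof.
case/edge_inP => x [y [xS yS _ ->]].
by apply/subsetP => z; rewrite !inE => /orP[]/eqP->.
Qed.

Lemma edge_restr (T : finType) (e : rel T) (S S' : {set T}) f :
  edge_in e S f -> f \subset S' -> edge_in e S' f.
Proof.
case/edge_inP => x [y [_ _ exy ef]] sf.
have xS : x \in S' by apply: (subsetP sf); rewrite ef !inE eqxx.
have yS : y \in S' by apply: (subsetP sf); rewrite ef !inE eqxx orbT.
by apply/existsP; exists x; apply/existsP; exists y; rewrite xS yS exy ef eqxx.
Qed.

Lemma adj_edge (T : finType) (e : rel T) (S : {set T}) (F : {set {set T}}) u v :
  {in F, forall f, edge_in e S f} -> adjF F u v -> u \in S /\ v \in S.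
Proof.
move=> eF /andP[_ uvF]; have /subsetP sS := edge_sub (eF _ uvF).
by split; apply: sS; rewrite !inE eqxx ?orbT.
Qed.

Lemma conn_restrict (T : finType) (H : {set {set T}}) (S : {set T}) (r : rel T) a b :
  (forall u v, u \in S -> v \in S -> adjF H u v -> r u v) ->
  (forall c, connect (adjF H) a c -> c \in S) ->
  connect (adjF H) a b -> connect r a b.
Proof.
move=> hr hS /connectP [p pp eb]; apply/connectP; exists p; last exact: eb.
have allS : all (mem S) (a :: p) by apply/allP => c /(path_connect pp) /hS.
apply: (@sub_in_path _ (mem S) (adjF H)) allS pp.
by move=> u v uS vS; apply: hr.
Qed.

Lemma restr_U (T : finType) (e : rel T) (P : {set {set T}}) (g : {ffun {set T} -> {set {set T}}}) (S : {set T}) :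
  trivIset P -> (forall S, S \in P -> {in g S, forall f, edge_in e S f}) ->
  S \in P -> restr (UU P g) S = g S.
Proof.
move=> tI hg PS; apply/setP => f; rewrite !inE; apply/andP/idP.
  case=> /bigcupP [S' PS' fS'] fS.
  have [x [y [xS' _ _ ef]]] := edge_inP (hg _ PS' _ fS').
  have xS : x \in S by apply: (subsetP fS); rewrite ef !inE eqxx.
  by rewrite -(def_pblock tI PS xS) (def_pblock tI PS' xS').
move=> fS; split; first by apply/bigcupP; exists S.
exact: edge_sub (hg _ PS _ fS).
Qed.

Lemma comp_U (T : finType) (e : rel T) (P : {set {set T}}) (g : {ffun {set T} -> {set {set T}}}) :
  partition P [set: T] -> (forall S, S \in P -> spanning_tree e S (g S)) ->
  components (UU P g) = P.
Proof.
move=> hP hg; rewrite -[RHS](equivalence_partition_pblock hP) /components.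
have tI : trivIset P by case/and3P: hP.
have cov : cover P = [set: T] by apply/eqP; case/and3P: hP.
congr (equivalence_partition _ _); apply: funext => x; apply: funext => y.
apply/idP/idP.
  apply: (conn_ind (Q := fun v => v \in pblock P x)).
    move=> u v /andP[nuv]; rewrite /UU => /bigcupP [S PS uvS] ux.
    have [eS _ _] := hg _ PS.
    have [uS vS] : u \in S /\ v \in S.
      by apply: (@adj_edge _ e S (g S)); rewrite // /adjF nuv uvS.
    by rewrite -(same_pblock tI ux) (def_pblock tI PS uS).
  by rewrite mem_pblock cov in_setT.
move=> yx.
set S := pblock P x in yx.
have PS' : S \in P by apply: pblock_mem; rewrite cov in_setT.
have xS : x \in S by rewrite /S mem_pblock cov in_setT.
have [_ cS _] := hg _ PS'.
apply: connect_sub (cS x y xS yx) => u v /and3P[_ _ /andP[nuv uvS]].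
by apply: connect1; rewrite /adjF nuv; apply/bigcupP; exists S.
Qed.

Lemma prod_fam (T : finType) (e : rel T) (P : {set {set T}}) :
  \prod_(S in P) tau e S = #|pfamily set0 P (stS e)|.
Proof. by rewrite card_pfamily foldrE big_image. Qed.

Lemma card_slice (T : finType) (e : rel T) k (P : {set {set T}}) :
  balanced_connected_partition e k P ->
  #|[set H | `[< goodH e k H >] & components H == P]| = #|pfamily set0 P (stS e)|.
Proof.
move=> bP; have [hP _ _ _] := bP.
have tI : trivIset P by case/and3P: hP.
have cov : cover P = [set: T] by apply/eqP; case/and3P: hP.
have fam_st g : g \in pfamily set0 P (stS e) -> forall S, S \in P -> spanning_tree e S (g S).
  by case/pfamilyP => _ h S PS; have := h S PS; rewrite inE => /asboolP.
have fam_edge g : g \in pfamily set0 P (stS e) ->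
    forall S, S \in P -> {in g S, forall f, edge_in e S f}.
  by move=> gF S PS; case: (fam_st g gF S PS).
transitivity #|UU P @: [set g | g \in pfamily set0 P (stS e)]|; last first.
  rewrite card_in_imset ?cardsE //.
  move=> g1 g2; rewrite !inE => g1F g2F eU; apply/ffunP => S.
  case: (boolP (S \in P)) => PS.
    by rewrite -(restr_U tI (fam_edge _ g1F) PS) -(restr_U tI (fam_edge _ g2F) PS) eU.
  case/pfamilyP: g1F => /subsetP s1 _; case/pfamilyP: g2F => /subsetP s2 _.
  have e1 : g1 S = set0 by apply/eqP; apply: contraNT PS => /s1.
  have e2 : g2 S = set0 by apply/eqP; apply: contraNT PS => /s2.
  by rewrite e1 e2.
apply: eq_card => H; rewrite inE; apply/idP/imsetP.
  case/andP => /asboolP [eH bH sH] /eqP cH.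
  pose gH := [ffun S => if S \in P then restr H S else set0].
  exists gH.
    rewrite inE; apply/pfamilyP; split.
      apply/subsetP => S; rewrite inE /gH ffunE; case: ifP => //; by rewrite eqxx.
    by move=> S PS; rewrite /gH ffunE PS inE; apply/asboolP; apply: sH; rewrite cH.
  apply/setP => f; apply/idP/bigcupP.
    move=> fH; have [x [y [_ _ exy ef]]] := edge_inP (eH _ fH).
    set S := pblock P x.
    have PS : S \in P by apply: pblock_mem; rewrite cov in_setT.
    have xS : x \in S by rewrite /S mem_pblock cov in_setT.
    have yS : y \in S.
      case: (eqVneq x y) => [<-//|nxy].
      rewrite /S -cH comp_pb; apply: connect1; by rewrite /adjF nxy -ef fH.
    exists S => //; rewrite /gH ffunE PS inE fH /=.
    by apply/subsetP => z; rewrite ef !inE => /orP[]/eqP->.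
  by move=> [S PS]; rewrite /gH ffunE PS inE => /andP[].
move=> [g gF ->]; rewrite inE in gF.
have cU := comp_U hP (fam_st g gF).
rewrite cU eqxx andbT; apply/asboolP; split; rewrite ?cU //.
  by move=> f /bigcupP [S PS fS]; apply: edge_restr (fam_edge g gF S PS f fS) (subsetT _).
move=> S PS.
by rewrite (restr_U tI (fam_edge g gF) PS); exact: fam_st.
Qed.

Lemma Bk_eq (T : finType) (e : rel T) k :
  Bk e k = #|[set H | `[< goodH e k H >] ]|.
Proof.
rewrite -sum1_card (partition_big (fun H => components H)
  (fun P => `[< balanced_connected_partition e k P >])); last first.
  by move=> H; rewrite inE => /asboolP [_ bH _]; apply/asboolP.
apply: eq_bigr => P /asboolP bP.
rewrite prod_fam -(card_slice bP) sum1dep_card; apply: eq_card => H.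
by rewrite !inE.
Qed.

Definition Ed (T : finType) : {set {set T}} :=
  (fun x y => [set x; y]) @2: ([set: T], [set: T]).

Definition DD (T : finType) (m : nat) :=
  [set R : {set {set T}} | (R \subset Ed T) && (#|R| == m)].

Lemma edge_Ed (T : finType) (e : rel T) (S : {set T}) f : edge_in e S f -> f \in Ed T.
Proof.
by case/edge_inP => x [y [_ _ _ ->]]; apply/imset2P; exists x y; rewrite ?in_setT.
Qed.

Lemma ffact_le a m : a ^_ m <= a ^ m.
Proof.
elim: m => [|m IH] //; rewrite ffactnSr expnSr; apply: leq_mul => //.
exact: leq_subr.
Qed.

Lemma card_DD (T : finType) m : #|DD T m| <= #|T| ^ (2 * m).
Proof.
rewrite /DD cards_draws.
have hE : #|Ed T| <= #|T| * #|T|.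
  rewrite /Ed curry_imset2X; apply: leq_trans (leq_imset_card _ _) _.
  by rewrite cardsX cardsT.
apply: (@leq_trans (#|Ed T| ^ m)).
  apply: leq_trans (ffact_le _ m); rewrite -bin_ffact; apply: leq_pmulr.
  exact: fact_gt0.
rewrite expnM -mulnn; case: m => [|m] //.
by rewrite leq_exp2r.
Qed.

Lemma pair_sub (T : finType) (u v : T) (S : {set T}) :
  u \in S -> v \in S -> [set u; v] \subset S.
Proof. by move=> uS vS; apply/subsetP => z; rewrite !inE => /orP[]/eqP->. Qed.

Lemma acyc_good (T : finType) (H : {set {set T}}) :
  (forall S, S \in components H -> acyclic (restr H S)) -> acyclic H.
Proof.
move=> h [s [ss us cs]]; case: s ss us cs => [|c q] // ss us cs.
set S := pblock (components H) c.
apply: (h S (comp_mem H c)); exists (c :: q); split => //.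
have allS : all (mem S) (c :: q).
  apply/allP => z zs; rewrite /S inE comp_pb.
  apply: (path_connect cs); move: zs; rewrite !in_cons mem_rcons in_cons.
  by case/orP => ->; rewrite ?orbT.
apply: (@sub_in_cycle _ (mem S) (adjF H)) allS cs.
move=> u v uS vS /andP[nuv uvH]; rewrite /adjF nuv inE uvH /=.
exact: pair_sub.
Qed.

Lemma good_of_split (T : finType) (e : rel T) k (F R : {set {set T}}) :
  spanning_tree e [set: T] F -> R \subset F -> #|components (F :\: R)| = k ->
  (forall A B, A \in components (F :\: R) -> B \in components (F :\: R) -> #|A| = #|B|) ->
  goodH e k (F :\: R).
Proof.
move=> [eF cF aF] sRF ncR eqR; set H := F :\: R.
have eH : {in H, forall f, edge_in e [set: T] f} by move=> f /setDP[fF _]; exact: eF.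
have clos S a c : S \in components H -> a \in S -> connect (adjF H) a c -> c \in S.
  by move=> PS aS; rewrite (comp_def PS aS) comp_pb.
have inS S a b : S \in components H -> a \in S -> b \in S -> connect (adjF H) a b.
  by move=> PS aS; rewrite (comp_def PS aS) comp_pb.
split => //.
  split; [exact: compP | exact: ncR | | exact: eqR].
  move=> S PS a b aS bS; apply: (@conn_restrict _ H S _ a b); last exact: inS PS aS bS.
    move=> u v uS vS /andP[nuv uvH]; rewrite uS vS /adjF nuv inE /=.
    exact: edge_restr (eH _ uvH) (pair_sub uS vS).
  by move=> c; apply: clos PS aS.
move=> S PS; split.
- move=> f; rewrite inE => /andP[fH fS]; exact: edge_restr (eH _ fH) fS.
- move=> a b aS bS; apply: (@conn_restrict _ H S _ a b); last exact: inS PS aS bS.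
    move=> u v uS vS /andP[nuv uvH]; rewrite uS vS /adjF nuv inE uvH /=.
    exact: pair_sub.
  by move=> c; apply: clos PS aS.
- apply: acyc_sub aF; apply/subsetP => f; rewrite inE => /andP[/setDP[]] //.
Qed.

Lemma dir1 (T : finType) (e : rel T) k :
  [set F : {set {set T}} | `[< spanning_tree e [set: T] F /\ splittable k F >] ]
  \subset [set p.1 :|: p.2 | p in setX [set H | `[< goodH e k H >] ] (DD T (k - 1))].
Proof.
apply/subsetP => F; rewrite inE => /asboolP [stF [R [sRF cR ncR eqR]]].
apply/imsetP; exists (F :\: R, R).
  rewrite inE /=; apply/andP; split.
    by rewrite inE; apply/asboolP; apply: good_of_split.
  rewrite inE; apply/andP; split; last by rewrite cR subn1.
  case: stF => eF _ _.
  by apply/subsetP => f fR; exact: edge_Ed (eF _ (subsetP sRF _ fR)).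
apply/setP => f; rewrite /= !inE; case: (boolP (f \in R)) => fR /=.
  by rewrite (subsetP sRF _ fR).
by rewrite orbF.
Qed.

Lemma dir2 (T : finType) (e : rel T) k :
  simple_graph e -> graph_connected e -> 1 <= k ->
  [set H | `[< goodH e k H >] ] \subset
  [set p.1 :\: p.2 | p in setX
    [set F : {set {set T}} | `[< spanning_tree e [set: T] F /\ splittable k F >] ]
    (DD T (k - 1))].
Proof.
move=> sg gc k1; apply/subsetP => H; rewrite inE => /asboolP [eH bH sH].
have acH : acyclic H.
  by apply: acyc_good => S PS; case: (sH S PS).
have [hP cP conP eqP'] := bH.
have cH : #|components H| = (k - 1).+1 by rewrite cP subn1 prednK.
have [R [dR cR eR aF coF]] := extend sg gc acH eH cH.
have eHR : (H :|: R) :\: R = H.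
  apply/setP => f; rewrite !inE; case: (boolP (f \in R)) => fR /=.
    by rewrite (negbTE (dR _ fR)).
  by rewrite orbF.
apply/imsetP; exists (H :|: R, R); last by rewrite /= eHR.
rewrite inE /=; apply/andP; split.
  rewrite inE; apply/asboolP; split.
    split => //; move=> f /setUP[]; [exact: eH | exact: eR].
  exists R; rewrite eHR; split => //; first exact: subsetUr.
  by rewrite cR subn1.
rewrite inE; apply/andP; split; last by rewrite cR.
by apply/subsetP => f fR; exact: edge_Ed (eR _ fR).
Qed.

Theorem mainTheorem9 (T : finType) (e : rel T) (k : nat) :
  simple_graph e -> graph_connected e -> 0 < #|T| -> 1 <= k ->
  tauk e k <= #|T| ^ (2 * (k - 1)) * Bk e k /\
  Bk e k <= #|T| ^ (2 * (k - 1)) * tauk e k.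
Proof.
move=> sg gc _ k1; rewrite Bk_eq /tauk.
have hD := card_DD T (k - 1).
split.
  apply: leq_trans (subset_leq_card (dir1 e k)) _.
  apply: leq_trans (leq_imset_card _ _) _.
  by rewrite cardsX mulnC leq_mul.
apply: leq_trans (subset_leq_card (dir2 sg gc k1)) _.
apply: leq_trans (leq_imset_card _ _) _.
by rewrite cardsX mulnC leq_mul.
Qed.
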